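(* For every target rate $r>0$, $P_{\rm r}>0$ and $\mathcal C_x\in[0,1)$, \[ \mathcal P_{\rm E-E}(P_{\rm r},\mathcal C_x)\ge 1-\frac{e^{-\Psi_r(\mathcal C_x)\left(\frac1{P_{\rm s}\theta_{\rm sr}}+\frac1{P_{\rm r}\theta_{\rm rd}(1-\mathcal C_x^2)}\right)}}{\Gamma(m_{\rm sd})\Gamma(m_{\rm rr})\theta_{\rm sd}^{m_{\rm sd}}\theta_{\rm rr}^{m_{\rm rr}}}\sum_{m=0}^{m_{\rm sr}-1}\sum_{m'=0}^{m_{\rm rd}-1}\sum_{k=0}^m\sum_{k'=0}^{m'}\binom mk\binom{m'}{k'} \frac{\dfrac{P_{\rm r}^{k-m'}\Gamma(k+m_{\rm rr})\Gamma(k'+m_{\rm sd})\Psi_r(\mathcal C_x)^{m+m'}}{P_{\rm s}^{m-k'}\Gamma(m+1)\Gamma(m'+1)\theta_{\rm sr}^m\theta_{\rm rd}^{m'}(1-\mathcal C_x^2)^{m'}}}{\left(\frac{P_{\rm r}\Psi_r(\mathcal C_x)}{P_{\rm s}\theta_{\rm sr}}+\frac1{\theta_{\rm rr}}\right)^{k+m_{\rm rr}}\left(\frac{P_{\rm s}\Psi_r(\mathcal C_x)}{P_{\rm r}\theta_{\rm rd}(1-\mathcal C_x^2)}+\frac1{\theta_{\rm sd}}\right)^{k'+m_{\rm sd}}}=:\mathcal P^{\rm LB}_{\rm E-E}(P_{\rm r},\mathcal C_x). \]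
   Context: Let $P_{\rm s}>0$, $P_{\rm r}>0$ be the source and relay transmit powers. For links $ij\in\{\mathrm{sr},\mathrm{rr},\mathrm{rd},\mathrm{sd}\}$ let $g_{ij}$ be mutually independent random channel gains, $g_{ij}$ gamma distributed with integer shape parameter $m_{ij}\ge1$ and scale $\theta_{ij}=\pi_{ij}/m_{ij}$, where $\pi_{ij}=\mathbb E[g_{ij}]>0$; i.e. $g_{ij}$ has density $x^{m_{ij}-1}e^{-x/\theta_{ij}}/(\Gamma(m_{ij})\theta_{ij}^{m_{ij}})$ for $x\ge0$. For a circularity coefficient $\mathcal C_x\in[0,1)$ define $R_{\rm sr}(P_{\rm r},\mathcal C_x)=\tfrac12\log_2\frac{(P_{\rm s}g_{\rm sr}+P_{\rm r}g_{\rm rr}+1)^2-(P_{\rm r}g_{\rm rr}\mathcal C_x)^2}{(P_{\rm r}g_{\rm rr}+1)^2-(P_{\rm r}g_{\rm rr}\mathcal C_x)^2}$ and $R_{\rm rd}(P_{\rm r},\mathcal C_x)=\tfrac12\log_2\frac{(P_{\rm r}g_{\rm rd}+P_{\rm s}g_{\rm sd}+1)^2-(P_{\rm r}g_{\rm rd}\mathcal C_x)^2}{(P_{\rm s}g_{\rm sd}+1)^2}$. For a target rate $r>0$ put $\gamma=2^{2r}-1$, $\eta=2^r-1$ and $\Psi_r(x)=\sqrt{1+\gamma(1-x^2)}-1$. The outage probabilities are $\mathcal P_{\rm sr}=\mathbb P\{R_{\rm sr}<r\}$, $\mathcal P_{\rm rd}=\mathbb P\{R_{\rm rd}<r\}$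 and $\mathcal P_{\rm E-E}=\mathbb P\{\min(R_{\rm sr},R_{\rm rd})<r\}$. *)

(* Defs.v *)
From Stdlib Require Import Reals Lra Factorial.
Open Scope R_scope.

Definition Gam (n : nat) : R := INR (Factorial.fact (pred n)).

Definition log2 (x : R) : R := ln x / ln 2.

Definition theta (pi : R) (m : nat) : R := pi / INR m.

(* gamma density with integer shape m and scale th, on x >= 0 *)
Definition gamma_pdf (m : nat) (th x : R) : R :=
  x ^ (pred m) * exp (- x / th) / (Gam m * th ^ m).

Definition R_sr (Ps Pr Cx gsr grr : R) : R :=
  / 2 * log2 (((Ps * gsr + Pr * grr + 1) ^ 2 - (Pr * grr * Cx) ^ 2)
              / ((Pr * grr + 1) ^ 2 - (Pr * grr * Cx) ^ 2)).

Definition R_rd (Ps Pr Cx grd gsd : R) : R :=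
  / 2 * log2 (((Pr * grd + Ps * gsd + 1) ^ 2 - (Pr * grd * Cx) ^ 2)
              / (Ps * gsd + 1) ^ 2).

Definition ImprInt0 (f : R -> R) (L : R) : Prop :=
  forall eps, 0 < eps -> exists M, forall b, M <= b ->
    exists pr : Riemann_integrable f 0 b, Rabs (RiemannInt pr - L) < eps.

Definition IterInt4 (h : R -> R -> R -> R -> R) (P : R) : Prop :=
  exists F1 : R -> R, ImprInt0 F1 P /\
  forall x1, 0 <= x1 -> exists F2 : R -> R, ImprInt0 F2 (F1 x1) /\
  forall x2, 0 <= x2 -> exists F3 : R -> R, ImprInt0 F3 (F2 x2) /\
  forall x3, 0 <= x3 -> ImprInt0 (fun x4 => h x1 x2 x3 x4) (F3 x3).

(* indicator of min(R_sr, R_rd) < r, times the joint density of the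
   independent gains (g_sr, g_rr, g_rd, g_sd) *)
Definition outage_integrand (Ps Pr Cx r : R)
    (msr mrr mrd msd : nat) (pisr pirr pird pisd : R)
    (gsr grr grd gsd : R) : R :=
  (if Rlt_dec (Rmin (R_sr Ps Pr Cx gsr grr) (R_rd Ps Pr Cx grd gsd)) r
   then 1 else 0)
  * gamma_pdf msr (theta pisr msr) gsr
  * gamma_pdf mrr (theta pirr mrr) grr
  * gamma_pdf mrd (theta pird mrd) grd
  * gamma_pdf msd (theta pisd msd) gsd.

Definition is_P_EE (Ps Pr Cx r : R) (msr mrr mrd msd : nat)
    (pisr pirr pird pisd : R) (P : R) : Prop :=
  IterInt4 (outage_integrand Ps Pr Cx r msr mrr mrd msd pisr pirr pird pisd) P.

Definition gam_r (r : R) : R := Rpower 2 (2 * r) - 1.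
Definition Psi (r x : R) : R := sqrt (1 + gam_r r * (1 - x ^ 2)) - 1.

Definition P_EE_LB (Ps Pr Cx r : R) (msr mrr mrd msd : nat)
    (pisr pirr pird pisd : R) : R :=
  let tsr := theta pisr msr in let trr := theta pirr mrr in
  let trd := theta pird mrd in let tsd := theta pisd msd in
  let ps := Psi r Cx in let c2 := 1 - Cx ^ 2 in
  1 - exp (- ps * (1 / (Ps * tsr) + 1 / (Pr * trd * c2)))
      / (Gam msd * Gam mrr * tsd ^ msd * trr ^ mrr)
    * sum_f_R0 (fun m =>
       sum_f_R0 (fun m' =>
        sum_f_R0 (fun k =>
         sum_f_R0 (fun k' =>
           Binomial.C m k * Binomial.C m' k' *
           ((powerRZ Pr (Z.of_nat k - Z.of_nat m')%Z * Gam (k + mrr)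
               * Gam (k' + msd) * ps ^ (m + m'))
            / (powerRZ Ps (Z.of_nat m - Z.of_nat k')%Z * Gam (m + 1)
               * Gam (m' + 1) * tsr ^ m * trd ^ m' * c2 ^ m'))
           / ((Pr * ps / (Ps * tsr) + 1 / trr) ^ (k + mrr)
              * (Ps * ps / (Pr * trd * c2) + 1 / tsd) ^ (k' + msd)))
         m') m) (pred mrd)) (pred msr).

(* Main.v *)
Require Import Defs.
From Stdlib Require Import Reals Lra Lia Psatz Factorial Binomial ZArith.
From Coquelicot Require Import Coquelicot.
Open Scope R_scope.


Definition Sx (n : nat) (u : R) : R := sum_f_R0 (fun j => u ^ j / INR (fact j)) n.

Lemma Sx_S n u : Sx (S n) u = Sx n u + u ^ (S n) / INR (fact (S n)).
Proof. reflexivity. Qed.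

Lemma Sx_deriv n u : is_derive (Sx n) u (Sx n u - u ^ n / INR (fact n)).
Proof.
  revert u.
  induction n as [|n IH]; intro u.
  - unfold Sx; simpl. apply is_derive_ext with (f := fun _ => 1 / 1).
    { intros t; simpl; field. }
    auto_derive; auto. field.
  - apply is_derive_ext with (f := fun u => Sx n u + u ^ (S n) / INR (fact (S n))).
    { intros t; rewrite Sx_S; reflexivity. }
    auto_derive.
    + eexists; apply IH.
    + replace (Derive (fun x : R => Sx n x) u) with (Derive (Sx n) u) by reflexivity.
      rewrite (is_derive_unique _ _ _ (IH u)).
      rewrite Sx_S. replace (fact n + n * fact n)%nat with (fact (S n)) by reflexivity.
      rewrite fact_simpl, mult_INR.
      replace (match n with | 0%nat => 1 | S _ => INR n + 1 end) with (INR (S n)) by (destruct n; simpl; auto).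
      assert (INR (fact n) <> 0) by apply INR_fact_neq_0.
      rewrite S_INR. assert (INR n + 1 <> 0) by (pose proof (pos_INR n); lra).
      simpl. field. auto.
Qed.

Definition Tl (m : nat) (th t : R) : R := exp (- t / th) * Sx (pred m) (t / th).

Lemma Gam_S n : Gam (S n) = INR (fact n).
Proof. reflexivity. Qed.

Lemma Tl_deriv m th t : (1 <= m)%nat -> 0 < th ->
  is_derive (Tl m th) t (- gamma_pdf m th t).
Proof.
  intros Hm Hth. destruct m as [|n]; [lia|]. simpl pred.
  unfold Tl. simpl pred.
  auto_derive.
  - eexists; apply Sx_deriv.
  - match goal with |- context [Derive ?f ?p] =>
      replace (Derive f p) with (Sx n p - p ^ n / INR (fact n))
        by (symmetry; apply is_derive_unique; apply Sx_deriv) end.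
    unfold gamma_pdf. rewrite Gam_S.
    assert (INR (fact n) <> 0) by apply INR_fact_neq_0.
    unfold Rdiv. rewrite Rpow_mult_distr, pow_inv. simpl.
    assert (th ^ n <> 0) by (apply pow_nonzero; lra).
    field. split; lra.
Qed.

Lemma Sx_0 n : Sx n 0 = 1.
Proof.
  induction n as [|n IH]. unfold Sx; simpl; field.
  rewrite Sx_S, IH. rewrite pow_i by lia. unfold Rdiv. ring.
Qed.

Lemma Tl_0 m th : th <> 0 -> Tl m th 0 = 1.
Proof.
  intros Hth. unfold Tl. replace (- 0 / th) with 0 by (field; auto). rewrite exp_0.
  replace (0 / th) with 0 by (field; auto). rewrite Sx_0. ring.
Qed.

Lemma pdf_cont m th x : continuous (gamma_pdf m th) x.
Proof.
  apply (ex_derive_continuous (K:=R_AbsRing) (V:=R_NormedModule)). unfold gamma_pdf. auto_derive. auto.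
Qed.

Lemma Tl_cont m th x : (1 <= m)%nat -> 0 < th -> continuous (Tl m th) x.
Proof.
  intros. apply (ex_derive_continuous (K:=R_AbsRing) (V:=R_NormedModule)). eexists. apply Tl_deriv; auto.
Qed.

Lemma int_pdf m th a b : (1 <= m)%nat -> 0 < th ->
  is_RInt (gamma_pdf m th) a b (Tl m th a - Tl m th b).
Proof.
  intros Hm Hth.
  replace (Tl m th a - Tl m th b) with (minus ((fun t => - Tl m th t) b) ((fun t => - Tl m th t) a))
    by (unfold minus, plus, opp; simpl; ring).
  apply (is_RInt_derive (V:=R_CompleteNormedModule) (fun t => - Tl m th t)).
  - intros x _. auto_derive.
    + eexists; apply Tl_deriv; auto.
    + match goal with |- context [Derive ?f ?p] =>
      replace (Derive f p) with (- gamma_pdf m th p)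
        by (symmetry; apply is_derive_unique; apply Tl_deriv; auto) end. ring.
  - intros; apply pdf_cont.
Qed.

Lemma pdf_nonneg m th x : 0 < th -> 0 <= x -> 0 <= gamma_pdf m th x.
Proof.
  intros Hth Hx. unfold gamma_pdf, Gam.
  apply Rmult_le_pos. apply Rmult_le_pos. apply pow_le; auto. left; apply exp_pos.
  left. apply Rinv_0_lt_compat. apply Rmult_lt_0_compat. apply lt_0_INR, lt_O_fact.
  apply pow_lt; auto.
Qed.

Lemma Sx_nonneg n u : 0 <= u -> 0 <= Sx n u.
Proof.
  intros Hu. induction n as [|n IH]. unfold Sx; simpl; lra.
  rewrite Sx_S. apply Rplus_le_le_0_compat; auto. apply Rmult_le_pos. apply pow_le; auto.
  left; apply Rinv_0_lt_compat, lt_0_INR, lt_O_fact.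
Qed.

Lemma Tl_nonneg m th t : 0 < th -> 0 <= t -> 0 <= Tl m th t.
Proof.
  intros. unfold Tl. apply Rmult_le_pos. left; apply exp_pos. apply Sx_nonneg.
  unfold Rdiv; apply Rmult_le_pos; auto. left; apply Rinv_0_lt_compat; auto.
Qed.

Lemma Tl_decr m th s t : (1 <= m)%nat -> 0 < th -> 0 <= s <= t -> Tl m th t <= Tl m th s.
Proof.
  intros Hm Hth Hst.
  assert (0 <= Tl m th s - Tl m th t); [|lra].
  eapply is_RInt_ge_0. 2: apply int_pdf; auto. lra.
  intros; apply pdf_nonneg; lra.
Qed.

Lemma Tl_le1 m th t : (1 <= m)%nat -> 0 < th -> 0 <= t -> Tl m th t <= 1.
Proof.
  intros. rewrite <- (Tl_0 m th) by lra. apply Tl_decr; auto. lra.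
Qed.

Lemma exp_Sx_le1 k u : 0 <= u -> exp (- u) * Sx k u <= 1.
Proof.
  intros Hu. pose proof (Tl_le1 (S k) 1 u ltac:(lia) ltac:(lra) Hu) as H.
  unfold Tl in H. simpl pred in H. replace (- u / 1) with (- u) in H by field.
  replace (u / 1) with u in H by field. auto.
Qed.

Lemma exp_term_bound j u : 0 < u -> exp (- u) * (u ^ j / INR (fact j)) <= INR (S j) / u.
Proof.
  intros Hu. pose proof (exp_Sx_le1 (S j) u ltac:(lra)) as H.
  assert (Hs : u ^ S j / INR (fact (S j)) <= Sx (S j) u).
  { rewrite Sx_S. pose proof (Sx_nonneg j u ltac:(lra)). lra. }
  assert (H2 : exp (- u) * (u ^ S j / INR (fact (S j))) <= 1).
  { eapply Rle_trans; [|apply H]. apply Rmult_le_compat_l; auto. left; apply exp_pos. }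
  rewrite fact_simpl, mult_INR in H2. simpl pow in H2.
  assert (INR (fact j) > 0) by apply lt_0_INR, lt_O_fact.
  assert (INR (S j) > 0) by (apply lt_0_INR; lia).
  pose proof (exp_pos (- u)).
  apply Rmult_le_reg_r with (r := u / INR (S j)).
  { apply Rdiv_lt_0_compat; lra. }
  replace (INR (S j) / u * (u / INR (S j))) with 1 by (field; lra).
  eapply Rle_trans; [|apply H2]. right. field. lra.
Qed.

Lemma exp_Sx_bound n u : 0 < u -> exp (- u) * Sx n u <= INR (S n) * INR (S n) / u.
Proof.
  intros Hu. induction n as [|n IH].
  - pose proof (exp_term_bound 0 u Hu). unfold Sx; simpl sum_f_R0. simpl INR in *.
    eapply Rle_trans; [apply H|]. apply Rmult_le_compat_r. left; apply Rinv_0_lt_compat; auto. lra.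
  - rewrite Sx_S, Rmult_plus_distr_l.
    pose proof (exp_term_bound (S n) u Hu).
    replace (INR (S (S n)) * INR (S (S n)) / u) with
      (INR (S n) * INR (S n) / u + INR (S (S n)) / u + INR (S n) / u)
      by (rewrite !S_INR; field; lra).
    assert (0 <= INR (S n) / u) by (apply Rmult_le_pos; [apply pos_INR| left; apply Rinv_0_lt_compat; auto]).
    lra.
Qed.

Definition LimP (I : R -> R) (L : R) : Prop :=
  forall eps, 0 < eps -> exists M, forall b, M <= b -> Rabs (I b - L) < eps.

Lemma Tl_lim m th : (1 <= m)%nat -> 0 < th -> LimP (Tl m th) 0.
Proof.
  intros Hm Hth eps Heps.
  set (K := INR (S (pred m)) * INR (S (pred m))).
  assert (HK : 0 < K) by (unfold K; apply Rmult_lt_0_compat; apply lt_0_INR; lia).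
  exists (K * th / eps + 1). intros b Hb.
  assert (Hb0 : 0 < b). { assert (0 < K * th / eps) by (apply Rdiv_lt_0_compat; [apply Rmult_lt_0_compat|]; lra). lra. }
  pose proof (Tl_nonneg m th b Hth ltac:(lra)).
  rewrite Rminus_0_r, Rabs_right by lra.
  unfold Tl. replace (- b / th) with (- (b / th)) by (field; lra).
  eapply Rle_lt_trans. apply exp_Sx_bound. apply Rdiv_lt_0_compat; lra.
  fold K. apply Rmult_lt_reg_r with (r := b / (th * eps)).
  apply Rdiv_lt_0_compat; [lra| apply Rmult_lt_0_compat; lra].
  replace (K / (b / th) * (b / (th * eps))) with (K / eps) by (field; repeat split; lra).
  replace (eps * (b / (th * eps))) with (b / th) by (field; split; lra).
  apply Rmult_lt_reg_r with (r := th); auto.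
  replace (b / th * th) with b by (field; lra).
  replace (K / eps * th) with (K * th / eps) by (field; lra). lra.
Qed.


Lemma LimP_ext I J L : (exists M, forall b, M <= b -> I b = J b) -> LimP J L -> LimP I L.
Proof.
  intros [M HM] HJ eps He. destruct (HJ eps He) as [M2 H2].
  exists (Rmax M M2). intros b Hb. rewrite HM. apply H2.
  all: pose proof (Rmax_l M M2); pose proof (Rmax_r M M2); lra.
Qed.

Lemma LimP_const c : LimP (fun _ => c) c.
Proof. intros eps He. exists 0. intros. rewrite Rminus_diag, Rabs_R0. auto. Qed.

Lemma LimP_plus I J a c : LimP I a -> LimP J c -> LimP (fun b => I b + J b) (a + c).
Proof.
  intros HI HJ eps He. destruct (HI (eps/2) ltac:(lra)) as [M1 H1].
  destruct (HJ (eps/2) ltac:(lra)) as [M2 H2].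
  exists (Rmax M1 M2). intros b Hb.
  pose proof (Rmax_l M1 M2); pose proof (Rmax_r M1 M2).
  specialize (H1 b ltac:(lra)); specialize (H2 b ltac:(lra)).
  replace (I b + J b - (a + c)) with ((I b - a) + (J b - c)) by ring.
  eapply Rle_lt_trans. apply Rabs_triang. lra.
Qed.

Lemma LimP_scal k I a : LimP I a -> LimP (fun b => k * I b) (k * a).
Proof.
  intros HI eps He.
  destruct (HI (eps / (Rabs k + 1))) as [M HM].
  { apply Rdiv_lt_0_compat; auto. pose proof (Rabs_pos k); lra. }
  exists M. intros b Hb. specialize (HM b Hb).
  replace (k * I b - k * a) with (k * (I b - a)) by ring. rewrite Rabs_mult.
  pose proof (Rabs_pos k). pose proof (Rabs_pos (I b - a)).
  apply Rle_lt_trans with ((Rabs k + 1) * Rabs (I b - a)). nra.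
  apply Rmult_lt_reg_r with (r := / (Rabs k + 1)). apply Rinv_0_lt_compat; lra.
  replace ((Rabs k + 1) * Rabs (I b - a) * / (Rabs k + 1)) with (Rabs (I b - a)) by (field; lra).
  auto.
Qed.

Lemma LimP_minus I J a c : LimP I a -> LimP J c -> LimP (fun b => I b - J b) (a - c).
Proof.
  intros HI HJ. apply LimP_ext with (J := fun b => I b + (-1) * J b).
  exists 0; intros; ring.
  replace (a - c) with (a + (-1) * c) by ring. apply LimP_plus; auto. apply LimP_scal; auto.
Qed.

Lemma LimP_bmult I J : LimP I 0 -> (exists M, forall b, M <= b -> Rabs (J b) <= 1) ->
  LimP (fun b => I b * J b) 0.
Proof.
  intros HI [M HM] eps He. destruct (HI eps He) as [M2 H2].
  exists (Rmax M M2). intros b Hb.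
  pose proof (Rmax_l M M2); pose proof (Rmax_r M M2).
  specialize (HM b ltac:(lra)); specialize (H2 b ltac:(lra)).
  rewrite Rminus_0_r in *. rewrite Rabs_mult.
  pose proof (Rabs_pos (I b)); pose proof (Rabs_pos (J b)). nra.
Qed.

Lemma LimP_affine J V al be : 0 < al -> LimP J V -> LimP (fun b => J (al * b - be)) V.
Proof.
  intros Hal HJ eps He. destruct (HJ eps He) as [M HM].
  exists ((M + be) / al). intros b Hb. apply HM.
  apply Rmult_le_compat_l with (r := al) in Hb; [|lra].
  replace (al * ((M + be) / al)) with (M + be) in Hb by (field; lra). lra.
Qed.

Lemma LimP_le I J a c : LimP I a -> LimP J c -> (exists M, forall b, M <= b -> I b <= J b) -> a <= c.
Proof.
  intros HI HJ [M HM].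
  destruct (Rle_or_lt a c) as [|Hlt]; auto.
  set (e := (a - c) / 2).
  destruct (HI e ltac:(unfold e; lra)) as [M1 H1].
  destruct (HJ e ltac:(unfold e; lra)) as [M2 H2].
  set (b := Rmax M (Rmax M1 M2)).
  pose proof (Rmax_l M (Rmax M1 M2)); pose proof (Rmax_r M (Rmax M1 M2)).
  pose proof (Rmax_l M1 M2); pose proof (Rmax_r M1 M2).
  specialize (HM b ltac:(unfold b; lra)); specialize (H1 b ltac:(unfold b; lra));
  specialize (H2 b ltac:(unfold b; lra)).
  apply Rabs_def2 in H1; apply Rabs_def2 in H2. unfold e in *. lra.
Qed.

Lemma LimP_ge0 I a : LimP I a -> (exists M, forall b, M <= b -> 0 <= I b) -> 0 <= a.
Proof.
  intros HI HM. eapply LimP_le. apply LimP_const. apply HI. destruct HM as [M HM]. exists M; auto.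
Qed.

Lemma LimP_mono I M0 B : (forall s t, M0 <= s <= t -> I s <= I t) -> (forall b, M0 <= b -> I b <= B) ->
  exists L, LimP I L.
Proof.
  intros Hmono Hb.
  set (E := fun y => exists b, M0 <= b /\ y = I b).
  assert (Hbound : bound E). { exists B. intros y [b [Hb1 ->]]. apply Hb; auto. }
  assert (Hne : exists y, E y). { exists (I M0). exists M0. split; [lra|auto]. }
  destruct (completeness E Hbound Hne) as [L [Hub Hlub]].
  exists L. intros eps He.
  assert (exists b, M0 <= b /\ L - eps < I b) as [b0 [Hb0 Hlt]].
  { apply Classical_Prop.NNPP. intros Hn.
    assert (is_upper_bound E (L - eps)).
    { intros y [b [Hb1 ->]]. destruct (Rle_or_lt (I b) (L - eps)); auto.
      exfalso; apply Hn; exists b; auto. }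
    specialize (Hlub _ H). lra. }
  exists b0. intros b Hbb.
  assert (I b <= L) by (apply Hub; exists b; split; [lra|auto]).
  assert (I b0 <= I b) by (apply Hmono; lra).
  apply Rabs_def1; lra.
Qed.

Lemma LimP_sum (I : nat -> R -> R) (L : nat -> R) n :
  (forall i, (i <= n)%nat -> LimP (I i) (L i)) ->
  LimP (fun b => sum_f_R0 (fun i => I i b) n) (sum_f_R0 L n).
Proof.
  induction n as [|n IH]; intros H.
  - simpl. apply H; lia.
  - simpl. apply LimP_plus. apply IH; intros; apply H; lia. apply H; lia.
Qed.

Lemma Impr_of f I L : (exists M, forall b, M <= b -> is_RInt f 0 b (I b)) -> LimP I L ->
  ImprInt0 f L.
Proof.
  intros [M HM] HL eps He. destruct (HL eps He) as [M2 H2].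
  exists (Rmax M M2). intros b Hb.
  pose proof (Rmax_l M M2); pose proof (Rmax_r M M2).
  assert (Hi : is_RInt f 0 b (I b)) by (apply HM; lra).
  exists (ex_RInt_Reals_0 _ _ _ (ex_intro _ _ Hi)).
  rewrite <- RInt_Reals. rewrite (is_RInt_unique _ _ _ _ Hi). apply H2; lra.
Qed.


Definition Cd (n : nat) (et t : R) : R := 1 - Tl n et (Rmax 0 t).

Lemma RI_zero a b : is_RInt (fun _ => 0) a b 0.
Proof.
  pose proof (is_RInt_const (V:=R_NormedModule) a b 0) as H.
  unfold scal in H; simpl in H; unfold mult in H; simpl in H. rewrite Rmult_0_r in H. exact H.
Qed.

Lemma RI_plus f g a b If Ig : is_RInt f a b If -> is_RInt g a b Ig ->
  is_RInt (fun x => f x + g x) a b (If + Ig).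
Proof. intros H1 H2. apply (is_RInt_plus (V:=R_NormedModule) _ _ _ _ _ _ H1 H2). Qed.

Lemma RI_scal f a b k If : is_RInt f a b If -> is_RInt (fun x => k * f x) a b (k * If).
Proof. intros H1. apply (is_RInt_scal (V:=R_NormedModule) _ _ _ _ _ H1). Qed.

Lemma RI_minus f g a b If Ig : is_RInt f a b If -> is_RInt g a b Ig ->
  is_RInt (fun x => f x - g x) a b (If - Ig).
Proof. intros H1 H2. apply (is_RInt_minus (V:=R_NormedModule) _ _ _ _ _ _ H1 H2). Qed.

Lemma RI_Chasles f a b c l1 l2 : is_RInt f a b l1 -> is_RInt f b c l2 -> is_RInt f a c (l1 + l2).
Proof. intros H1 H2. apply (is_RInt_Chasles (V:=R_NormedModule) _ _ _ _ _ _ H1 H2). Qed.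

Lemma RI_ext (f g : R -> R) a b l : (forall x, Rmin a b < x < Rmax a b -> f x = g x) -> is_RInt f a b l -> is_RInt g a b l.
Proof. intros H1 H2. apply (is_RInt_ext (V:=R_NormedModule) _ _ _ _ _ H1 H2). Qed.

Lemma cont_smooth (f : R -> R) (x : R) : ex_derive f x -> continuous f x.
Proof. apply (ex_derive_continuous (K:=R_AbsRing) (V:=R_NormedModule)). Qed.

Lemma exRI_cont (f : R -> R) a b : (forall z, Rmin a b <= z <= Rmax a b -> continuous f z) -> ex_RInt f a b.
Proof. apply (ex_RInt_continuous (V:=R_CompleteNormedModule)). Qed.

Lemma RI_correct (f : R -> R) a b : ex_RInt f a b -> is_RInt f a b (RInt f a b).
Proof. apply (RInt_correct (V:=R_CompleteNormedModule)). Qed.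

Lemma RInt_comp_linR (f : R -> R) u v a b : ex_RInt f (u * a + v) (u * b + v) ->
  RInt (fun y => u * f (u * y + v)) a b = RInt f (u * a + v) (u * b + v).
Proof. apply (RInt_comp_lin (V:=R_CompleteNormedModule)). Qed.

Lemma cont_mult (f g : R -> R) x : continuous f x -> continuous g x -> continuous (fun t => f t * g t) x.
Proof. apply (continuous_mult (U:=R_UniformSpace) (K:=R_AbsRing)). Qed.

Lemma cont_plus (f g : R -> R) x : continuous f x -> continuous g x -> continuous (fun t => f t + g t) x.
Proof. apply (continuous_plus (U:=R_UniformSpace) (K:=R_AbsRing) (V:=R_NormedModule)). Qed.

Lemma cont_opp (f : R -> R) x : continuous f x -> continuous (fun t => - f t) x.
Proof. apply (continuous_opp (U:=R_UniformSpace) (K:=R_AbsRing) (V:=R_NormedModule)). Qed.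

Lemma cont_minus (f g : R -> R) x : continuous f x -> continuous g x -> continuous (fun t => f t - g t) x.
Proof. intros. apply cont_plus; auto. apply cont_opp; auto. Qed.

Lemma cont_const (c x : R) : continuous (fun _ => c) x.
Proof. apply (continuous_const (U:=R_UniformSpace) (V:=R_UniformSpace)). Qed.

Lemma cont_comp (f g : R -> R) x : continuous f x -> continuous g (f x) -> continuous (fun t => g (f t)) x.
Proof. apply (continuous_comp (U:=R_UniformSpace) (V:=R_UniformSpace) (W:=R_UniformSpace)). Qed.

Lemma cont_ext (f g : R -> R) x : (forall t, f t = g t) -> continuous f x -> continuous g x.
Proof. intros H. apply (continuous_ext (T:=R_UniformSpace) (U:=R_UniformSpace)); auto. Qed.

Lemma Tl_0' m th : 0 < th -> Tl m th 0 = 1.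
Proof. intros; apply Tl_0; lra. Qed.

Lemma ex_derive_Tl m th x : (1 <= m)%nat -> 0 < th -> ex_derive (Tl m th) x.
Proof. intros; eexists; apply Tl_deriv; auto. Qed.

Lemma Derive_Tl m th x : (1 <= m)%nat -> 0 < th -> Derive (Tl m th) x = - gamma_pdf m th x.
Proof. intros; apply is_derive_unique; apply Tl_deriv; auto. Qed.

Lemma ex_derive_pdf m th x : ex_derive (gamma_pdf m th) x.
Proof. unfold gamma_pdf. auto_derive. auto. Qed.

Ltac exd := match goal with
  | |- ex_derive (fun _ => Tl _ _ _) _ => apply ex_derive_Tl; auto
  | |- ex_derive (fun _ => gamma_pdf _ _ _) _ => apply ex_derive_pdf
  | |- ex_derive (Tl _ _) _ => apply ex_derive_Tl; auto
  | |- ex_derive (gamma_pdf _ _) _ => apply ex_derive_pdf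
  end.
Ltac splits := repeat (match goal with |- _ /\ _ => split | |- True => exact I end).

Lemma swap m th n et al be (phi : R -> R) V :
  (1 <= m)%nat -> (1 <= n)%nat -> 0 < th -> 0 < et -> 0 < al -> 0 < be ->
  (forall y, phi y = gamma_pdf n et y * Tl m th ((y + be) / al)) ->
  LimP (fun s => RInt phi 0 s) V ->
  exists I, (forall b, be / al <= b ->
     is_RInt (fun x => gamma_pdf m th x * Cd n et (al * x - be)) 0 b (I b)) /\ LimP I V.
Proof.
  intros Hm Hn Hth Het Hal Hbe Hphi HV.
  set (x0 := be / al).
  assert (Hx0 : 0 < x0) by (unfold x0; apply Rdiv_lt_0_compat; auto).
  assert (Hax0 : al * x0 - be = 0) by (unfold x0; field; lra).
  exists (fun b => Tl m th b * (- (1 - Tl n et (al * b - be))) + RInt phi 0 (al * b - be)).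
  split.
  - intros b Hb.
    set (g := fun x => gamma_pdf m th x * Cd n et (al * x - be)).
    assert (H1 : is_RInt g 0 x0 0).
    { apply RI_ext with (f := fun _ => 0).
      - intros x Hx. rewrite Rmin_left, Rmax_right in Hx by lra.
        unfold g, Cd. rewrite Rmax_left.
        2: { assert (al * x < al * x0) by (apply Rmult_lt_compat_l; lra). lra. }
        rewrite Tl_0' by lra. rewrite Rminus_diag, Rmult_0_r. reflexivity.
      - apply RI_zero. }
    set (F := fun x => - Tl m th x * (1 - Tl n et (al * x - be))).
    set (h := fun x => gamma_pdf m th x * (1 - Tl n et (al * x - be))
                       - Tl m th x * (al * gamma_pdf n et (al * x - be))).
    assert (H2 : is_RInt h x0 b (F b - F x0)).
    { replace (F b - F x0) with (minus (F b) (F x0)) by reflexivity.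
      apply (is_RInt_derive (V:=R_CompleteNormedModule) F h).
      - intros x _. unfold F, h. auto_derive.
        + splits; exd.
        + rewrite !Derive_Tl by auto. replace (al * x + - be) with (al * x - be) by ring. ring.
      - intros x _. apply cont_smooth.
        unfold h. auto_derive. splits; try exd. }
    assert (Hphic : forall y, continuous phi y).
    { intros y. apply cont_ext with (f := fun y => gamma_pdf n et y * Tl m th ((y + be) / al)).
      intros; rewrite Hphi; auto.
      apply cont_smooth.
      auto_derive. splits; try exd. }
    assert (H3 : is_RInt (fun x => Tl m th x * (al * gamma_pdf n et (al * x - be))) x0 b
                   (RInt phi 0 (al * b - be))).
    { assert (Hex : ex_RInt phi (al * x0 + - be) (al * b + - be)).
      { apply exRI_cont. intros; apply Hphic. }
      pose proof (RInt_comp_linR phi al (- be) x0 b Hex) as Hc.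
      replace (al * x0 + - be) with 0 in Hc by lra.
      replace (al * b + - be) with (al * b - be) in Hc by ring.
      rewrite <- Hc.
      apply RI_ext with (f := fun y => al * phi (al * y + - be)).
      { intros x _. rewrite Hphi.
        replace ((al * x + - be + be) / al) with x by (field; lra).
        replace (al * x + - be) with (al * x - be) by ring. ring. }
      apply RI_correct. apply exRI_cont. intros z _.
      apply cont_mult. apply cont_const.
      apply (cont_comp (fun y => al * y + - be) phi).
      apply cont_smooth. auto_derive; auto.
      apply Hphic. }
    pose proof (RI_plus _ _ _ _ _ _ H2 H3) as H23.
    assert (H4 : is_RInt g x0 b (F b - F x0 + RInt phi 0 (al * b - be))).
    { eapply RI_ext; [|apply H23]. intros x Hx.
      destruct (Rle_lt_or_eq_dec x0 b Hb) as [Hlt|Heq].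
      2: { subst. rewrite Rmin_left, Rmax_left in Hx by lra. lra. }
      rewrite Rmin_left, Rmax_right in Hx by lra.
      unfold g, h, Cd, plus; simpl. rewrite Rmax_right.
      2: { assert (al * x0 < al * x) by (apply Rmult_lt_compat_l; lra). lra. }
      ring. }
    pose proof (RI_Chasles _ _ _ _ _ _ H1 H4) as H5.
    replace (Tl m th b * - (1 - Tl n et (al * b - be)) + RInt phi 0 (al * b - be))
      with (0 + (F b - F x0 + RInt phi 0 (al * b - be))).
    exact H5.
    unfold F. rewrite Hax0, Tl_0' by lra. ring.
  - replace V with (0 + V) by ring. apply LimP_plus.
    + apply LimP_bmult. apply Tl_lim; auto.
      exists x0. intros b Hb.
      assert (0 <= al * b - be).
      { assert (al * x0 <= al * b) by (apply Rmult_le_compat_l; lra). lra. }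
      pose proof (Tl_nonneg n et _ Het H). pose proof (Tl_le1 n et _ Hn Het H).
      rewrite Rabs_Ropp, Rabs_right by lra. lra.
    + apply (LimP_affine (fun s => RInt phi 0 s)); auto.
Qed.


Definition mom_val (n : nat) (c s : R) : R := INR (fact n) / c ^ (S n) * (1 - Tl (S n) (/ c) s).

Lemma moment_RI n c s : 0 < c -> is_RInt (fun y => y ^ n * exp (- (c * y))) 0 s (mom_val n c s).
Proof.
  intros Hc.
  pose proof (int_pdf (S n) (/ c) 0 s ltac:(lia) ltac:(apply Rinv_0_lt_compat; auto)) as H.
  rewrite Tl_0' in H by (apply Rinv_0_lt_compat; auto).
  apply RI_scal with (k := INR (fact n) / c ^ (S n)) in H.
  eapply RI_ext; [|apply H].
  intros x _. unfold gamma_pdf. rewrite Gam_S. simpl pred.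
  replace (- x / / c) with (- (c * x)) by (field; lra).
  rewrite pow_inv.
  assert (INR (fact n) <> 0) by apply INR_fact_neq_0.
  assert (c ^ S n <> 0) by (apply pow_nonzero; lra).
  field. auto.
Qed.

Lemma moment_lim n c : 0 < c -> LimP (mom_val n c) (INR (fact n) / c ^ (S n)).
Proof.
  intros Hc. unfold mom_val.
  pose proof (LimP_scal (INR (fact n) / c ^ (S n)) _ _
    (LimP_minus _ _ _ _ (LimP_const 1) (Tl_lim (S n) (/ c) ltac:(lia) ltac:(apply Rinv_0_lt_compat; auto)))) as H.
  rewrite Rminus_0_r, Rmult_1_r in H. exact H.
Qed.

Lemma RI_sum (f : nat -> R -> R) (I : nat -> R) a b n :
  (forall i, (i <= n)%nat -> is_RInt (f i) a b (I i)) ->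
  is_RInt (fun y => sum_f_R0 (fun i => f i y) n) a b (sum_f_R0 I n).
Proof.
  induction n as [|n IH]; intros H.
  - simpl. apply H; lia.
  - simpl. apply RI_plus. apply IH; intros; apply H; lia. apply H; lia.
Qed.

Definition cf (N : nat) (et w P : R) (j k : nat) : R :=
  exp (- w) * w ^ j / INR (fact j) * Binomial.C j k * P ^ k / (Gam N * et ^ N).

Lemma sum_scal_l (f : nat -> R) n c : c * sum_f_R0 f n = sum_f_R0 (fun i => c * f i) n.
Proof. rewrite scal_sum. apply sum_eq. intros; ring. Qed.

Lemma expand N n et w P y : (1 <= N)%nat -> 0 < et ->
  gamma_pdf N et y * (exp (- (w * (P * y + 1))) * Sx n (w * (P * y + 1))) =
  sum_f_R0 (fun j => sum_f_R0 (fun k => cf N et w P j k *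
      (y ^ (k + pred N) * exp (- ((w * P + / et) * y)))) j) n.
Proof.
  intros HN Het. unfold Sx.
  rewrite <- Rmult_assoc, sum_scal_l. apply sum_eq. intros j Hj.
  rewrite Rpow_mult_distr, binomial.
  match goal with |- ?A * ?E * (?W * sum_f_R0 ?g j / ?D) = _ =>
    transitivity ((A * E * W / D) * sum_f_R0 g j);
    [field; apply INR_fact_neq_0|] end.
  rewrite sum_scal_l.
  apply sum_eq. intros k Hk.
  rewrite pow1, pow_add, Rpow_mult_distr.
  unfold cf, gamma_pdf.
  assert (E : exp (- (w * (P * y + 1))) * exp (- y / et) = exp (- w) * exp (- ((w * P + / et) * y))).
  { rewrite <- !exp_plus. f_equal. field. lra. }
  assert (Gam N <> 0) by (unfold Gam; apply INR_fact_neq_0).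
  assert (et ^ N <> 0) by (apply pow_nonzero; lra).
  assert (INR (fact j) <> 0) by apply INR_fact_neq_0.
  transitivity ((exp (- (w * (P * y + 1))) * exp (- y / et)) *
     (y ^ pred N / (Gam N * et ^ N) * (w ^ j * / INR (fact j) * (Binomial.C j k * (P ^ k * y ^ k))))).
  { field. auto. }
  rewrite E. field. auto.
Qed.

Definition tail_val (N n : nat) (et w P : R) : R :=
  sum_f_R0 (fun j => sum_f_R0 (fun k => cf N et w P j k *
      (INR (fact (k + pred N)) / (w * P + / et) ^ (S (k + pred N)))) j) n.

Lemma tail_int N n et w P : (1 <= N)%nat -> 0 < et -> 0 < w -> 0 < P ->
  LimP (fun s => RInt (fun y => gamma_pdf N et y *
           (exp (- (w * (P * y + 1))) * Sx n (w * (P * y + 1)))) 0 s)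
       (tail_val N n et w P).
Proof.
  intros HN Het Hw HP.
  set (X := w * P + / et).
  assert (HX : 0 < X).
  { unfold X. pose proof (Rinv_0_lt_compat et Het). pose proof (Rmult_lt_0_compat w P Hw HP). lra. }
  apply LimP_ext with (J := fun s => sum_f_R0 (fun j => sum_f_R0 (fun k => cf N et w P j k *
      mom_val (k + pred N) X s) j) n).
  - exists 0. intros s _. apply is_RInt_unique.
    eapply RI_ext.
    2: { apply RI_sum. intros j Hj. apply RI_sum. intros k Hk. apply RI_scal. apply moment_RI. auto. }
    intros x _. simpl. rewrite expand by auto. reflexivity.
  - unfold tail_val. apply LimP_sum. intros j Hj. apply LimP_sum. intros k Hk.
    apply LimP_scal. apply moment_lim. auto.
Qed.

Lemma RInt_extR (f g : R -> R) a b : (forall x, f x = g x) -> RInt f a b = RInt g a b.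
Proof. intros H. apply (RInt_ext (V:=R_CompleteNormedModule)). intros; auto. Qed.

Lemma U_lemma M th N et al be : (1 <= M)%nat -> (1 <= N)%nat -> 0 < th -> 0 < et -> 0 < al -> 0 < be ->
  exists I, (forall b, be / al <= b ->
     is_RInt (fun x => gamma_pdf M th x * Cd N et (al * x - be)) 0 b (I b)) /\
     LimP I (tail_val N (pred M) et (be / (al * th)) (/ be)).
Proof.
  intros HM HN Hth Het Hal Hbe.
  apply swap with (phi := fun y => gamma_pdf N et y * Tl M th ((y + be) / al)); auto.
  eapply LimP_ext; [|apply tail_int; auto].
  - exists 0. intros s _. apply RInt_extR. intros y. f_equal. unfold Tl.
    replace (- ((y + be) / al) / th) with (- (be / (al * th) * (/ be * y + 1))) by (field; lra).
    replace ((y + be) / al / th) with (be / (al * th) * (/ be * y + 1)) by (field; lra).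
    reflexivity.
  - apply Rdiv_lt_0_compat; auto. apply Rmult_lt_0_compat; auto.
  - apply Rinv_0_lt_compat; auto.
Qed.


Lemma ln2_pos : 0 < ln 2.
Proof. rewrite <- ln_1. apply ln_increasing; lra. Qed.

Lemma gam_pos r : 0 < r -> 0 < gam_r r.
Proof.
  intros Hr. unfold gam_r, Rpower.
  assert (exp 0 < exp (2 * r * ln 2)). apply exp_increasing.
  pose proof ln2_pos. nra. rewrite exp_0 in *. lra.
Qed.

Lemma log_lt r q : 0 < q -> (/ 2 * log2 q < r <-> q < 1 + gam_r r).
Proof.
  intros Hq. unfold log2, gam_r, Rpower. replace (1 + (exp (2 * r * ln 2) - 1)) with (exp (2 * r * ln 2)) by ring.
  pose proof ln2_pos.
  assert (E : / 2 * (ln q / ln 2) < r <-> ln q < 2 * r * ln 2).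
  { split; intros H'.
    - apply Rmult_lt_compat_r with (r := 2 * ln 2) in H'; [|lra].
      replace (/ 2 * (ln q / ln 2) * (2 * ln 2)) with (ln q) in H' by (field; lra). lra.
    - apply Rmult_lt_reg_r with (r := 2 * ln 2); [lra|].
      replace (/ 2 * (ln q / ln 2) * (2 * ln 2)) with (ln q) by (field; lra). lra. }
  rewrite E. split; intros H'.
  - rewrite <- (exp_ln q) by auto. apply exp_increasing; auto.
  - rewrite <- (ln_exp (2 * r * ln 2)). apply ln_increasing; auto.
Qed.

Definition Dq (gm c2 x : R) := (x - gm) ^ 2 + gm * c2 * ((x + 1) ^ 2 - 1 - gm).
Definition apf (gm c2 x : R) := (x - gm + sqrt (Dq gm c2 x)) / (gm * c2).
Definition tauf (gm c2 x : R) := Rmax 0 (apf gm c2 x).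

Section Phys.
Variables (Ps Pr Cx r : R).
Hypotheses (hPs : 0 < Ps) (hPr : 0 < Pr) (hr : 0 < r) (hC0 : 0 <= Cx) (hC1 : Cx < 1).

Let gm := gam_r r.
Let c2 := 1 - Cx ^ 2.
Let ps := Psi r Cx.

Lemma c2_pos : 0 < c2.
Proof. unfold c2. simpl. nra. Qed.

Lemma c2_le1 : c2 <= 1.
Proof. unfold c2. simpl. nra. Qed.

Lemma S_facts : 1 < sqrt (1 + gm * c2) /\ sqrt (1 + gm * c2) ^ 2 = 1 + gm * c2.
Proof.
  pose proof c2_pos. pose proof (gam_pos r hr). fold gm in H0.
  assert (0 < gm * c2) by (apply Rmult_lt_0_compat; auto).
  split.
  - rewrite <- sqrt_1 at 1. apply sqrt_lt_1; lra.
  - simpl. rewrite Rmult_1_r. apply sqrt_sqrt. lra.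
Qed.

Lemma ps_pos : 0 < ps.
Proof. unfold ps, Psi. fold gm. fold c2. pose proof S_facts. lra. Qed.

Lemma ps_sq : (1 + ps) ^ 2 = 1 + gm * c2.
Proof. unfold ps, Psi. fold gm. fold c2. pose proof S_facts. replace (1 + (sqrt (1 + gm * c2) - 1)) with (sqrt (1 + gm * c2)) by ring. tauto. Qed.

Lemma rd_equiv x3 x4 : 0 <= x3 -> 0 <= x4 ->
  (R_rd Ps Pr Cx x3 x4 < r <-> Pr * x3 * c2 < ps * (Ps * x4 + 1)).
Proof.
  intros H3 H4. unfold R_rd.
  set (b := Pr * x3). set (w := Ps * x4 + 1).
  assert (Hb : 0 <= b) by (unfold b; nra).
  assert (Hw : 1 <= w) by (unfold w; nra).
  idtac.
  replace (Ps * x4 + 1) with w by (unfold w; ring).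
  pose proof c2_pos. pose proof c2_le1. pose proof ps_pos. pose proof ps_sq.
  pose proof (gam_pos r hr). fold gm in H5.
  assert (HN : (b + w) ^ 2 - (b * Cx) ^ 2 = b ^ 2 * c2 + 2 * b * w + w ^ 2) by (unfold c2; ring).
  replace (b + Ps * x4 + 1) with (b + w) by (unfold w; ring). rewrite HN.
  assert (Hq : 0 < (b ^ 2 * c2 + 2 * b * w + w ^ 2) / w ^ 2).
  { apply Rdiv_lt_0_compat; nra. }
  rewrite (log_lt r _ Hq). fold gm.
  assert (E1 : (b ^ 2 * c2 + 2 * b * w + w ^ 2) / w ^ 2 < 1 + gm <->
               b ^ 2 * c2 + 2 * b * w + w ^ 2 < (1 + gm) * w ^ 2).
  { split; intros H'.
    - apply Rmult_lt_compat_r with (r := w ^ 2) in H'; [|nra].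
      replace ((b ^ 2 * c2 + 2 * b * w + w ^ 2) / w ^ 2 * w ^ 2) with (b ^ 2 * c2 + 2 * b * w + w ^ 2) in H'
        by (field; lra). lra.
    - apply Rmult_lt_reg_r with (r := w ^ 2); [nra|].
      replace ((b ^ 2 * c2 + 2 * b * w + w ^ 2) / w ^ 2 * w ^ 2) with (b ^ 2 * c2 + 2 * b * w + w ^ 2)
        by (field; lra). lra. }
  rewrite E1.
  assert (Key : b ^ 2 * c2 + 2 * b * w + w ^ 2 < (1 + gm) * w ^ 2 <-> (b * c2 + w) ^ 2 < ((1 + ps) * w) ^ 2).
  { replace (((1 + ps) * w) ^ 2) with ((1 + ps) ^ 2 * w ^ 2) by ring. rewrite H2.
    split; intros H'.
    - replace ((b * c2 + w) ^ 2) with (c2 * (b ^ 2 * c2 + 2 * b * w) + w ^ 2) by ring. nra.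
    - replace ((b * c2 + w) ^ 2) with (c2 * (b ^ 2 * c2 + 2 * b * w) + w ^ 2) in H' by ring. nra. }
  rewrite Key. split; intros H'.
  - assert (b * c2 + w < (1 + ps) * w).
    { destruct (Rlt_or_le (b * c2 + w) ((1 + ps) * w)) as [|Hle]; auto. exfalso.
      assert (((1 + ps) * w) ^ 2 <= (b * c2 + w) ^ 2) by (apply pow_incr; split; nra). lra. }
    lra.
  - assert (0 <= b * c2) by nra. nra.
Qed.

Lemma Dq_facts x : 0 <= x -> 0 <= Dq gm c2 x /\ x - gm <= sqrt (Dq gm c2 x).
Proof.
  intros Hx. pose proof c2_pos. pose proof c2_le1. pose proof (gam_pos r hr). fold gm in H1.
  assert (HD : 0 <= Dq gm c2 x).
  { unfold Dq. replace ((x - gm) ^ 2 + gm * c2 * ((x + 1) ^ 2 - 1 - gm)) with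
      ((x - gm * (1 - c2)) ^ 2 + gm * c2 * x ^ 2 + gm ^ 2 * (1 - c2) * c2) by ring.
    assert (0 <= gm * c2 * x ^ 2) by (apply Rmult_le_pos; [nra| apply pow2_ge_0]).
    assert (0 <= gm ^ 2 * (1 - c2) * c2) by (apply Rmult_le_pos; [apply Rmult_le_pos; [apply pow2_ge_0|lra]|lra]).
    pose proof (pow2_ge_0 (x - gm * (1 - c2))). lra. }
  split; auto.
  destruct (Rle_or_lt (x - gm) 0) as [Hle|Hlt].
  - pose proof (sqrt_pos (Dq gm c2 x)). lra.
  - rewrite <- (sqrt_pow2 (x - gm)) by lra. apply sqrt_le_1_alt.
    unfold Dq. assert (0 <= (x + 1) ^ 2 - 1 - gm) by nra.
    assert (0 <= gm * c2 * ((x + 1) ^ 2 - 1 - gm)) by (apply Rmult_le_pos; nra). lra.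
Qed.

Lemma sr_equiv x1 x2 : 0 <= x1 -> 0 < x2 ->
  (R_sr Ps Pr Cx x1 x2 < r <-> tauf gm c2 (Ps * x1) < Pr * x2).
Proof.
  intros H1 H2. unfold R_sr.
  set (x := Ps * x1). set (a := Pr * x2).
  assert (Hx : 0 <= x) by (unfold x; nra).
  assert (Ha : 0 < a) by (unfold a; nra).
  pose proof c2_pos. pose proof c2_le1. pose proof (gam_pos r hr). fold gm in H3.
  destruct (Dq_facts x Hx) as [HD Hs].
  set (s := sqrt (Dq gm c2 x)) in *.
  assert (Hs0 : 0 <= s) by apply sqrt_pos.
  assert (Hs2 : s * s = Dq gm c2 x) by (apply sqrt_sqrt; auto).
  set (K := gm * c2).
  assert (HK : 0 < K) by (unfold K; nra).
  assert (HN : (x + a + 1) ^ 2 - (a * Cx) ^ 2 = c2 * a ^ 2 + 2 * a * (x + 1) + (x + 1) ^ 2) by (unfold c2; ring).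
  assert (HDn : (a + 1) ^ 2 - (a * Cx) ^ 2 = c2 * a ^ 2 + 2 * a + 1) by (unfold c2; ring).
  rewrite HN, HDn.
  assert (HDp : 0 < c2 * a ^ 2 + 2 * a + 1) by nra.
  assert (Hq : 0 < (c2 * a ^ 2 + 2 * a * (x + 1) + (x + 1) ^ 2) / (c2 * a ^ 2 + 2 * a + 1)).
  { apply Rdiv_lt_0_compat; nra. }
  rewrite (log_lt r _ Hq). fold gm.
  assert (E1 : (c2 * a ^ 2 + 2 * a * (x + 1) + (x + 1) ^ 2) / (c2 * a ^ 2 + 2 * a + 1) < 1 + gm <->
      c2 * a ^ 2 + 2 * a * (x + 1) + (x + 1) ^ 2 < (1 + gm) * (c2 * a ^ 2 + 2 * a + 1)).
  { split; intros H'.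
    - apply Rmult_lt_compat_r with (r := c2 * a ^ 2 + 2 * a + 1) in H'; [|lra].
      replace ((c2 * a ^ 2 + 2 * a * (x + 1) + (x + 1) ^ 2) / (c2 * a ^ 2 + 2 * a + 1) * (c2 * a ^ 2 + 2 * a + 1))
        with (c2 * a ^ 2 + 2 * a * (x + 1) + (x + 1) ^ 2) in H' by (field; lra). lra.
    - apply Rmult_lt_reg_r with (r := c2 * a ^ 2 + 2 * a + 1); [lra|].
      replace ((c2 * a ^ 2 + 2 * a * (x + 1) + (x + 1) ^ 2) / (c2 * a ^ 2 + 2 * a + 1) * (c2 * a ^ 2 + 2 * a + 1))
        with (c2 * a ^ 2 + 2 * a * (x + 1) + (x + 1) ^ 2) by (field; lra). lra. }
  rewrite E1.
  assert (Kphi : K * ((c2 * a ^ 2 + 2 * a * (x + 1) + (x + 1) ^ 2) - (1 + gm) * (c2 * a ^ 2 + 2 * a + 1))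
                 = s * s - (K * a - (x - gm)) ^ 2).
  { rewrite Hs2. unfold Dq, K. ring. }
  unfold tauf, apf. fold s. fold K.
  assert (Hap : Rmax 0 ((x - gm + s) / K) < a <-> (x - gm + s) / K < a).
  { split; intros H'. eapply Rle_lt_trans; [apply Rmax_r|apply H'].
    apply Rmax_lub_lt; auto. }
  rewrite Hap.
  assert (Hdiv : (x - gm + s) / K < a <-> x - gm + s < K * a).
  { split; intros H'.
    - apply Rmult_lt_compat_l with (r := K) in H'; auto.
      replace (K * ((x - gm + s) / K)) with (x - gm + s) in H' by (field; lra). lra.
    - apply Rmult_lt_reg_l with (r := K); auto.
      replace (K * ((x - gm + s) / K)) with (x - gm + s) by (field; lra). lra. }
  rewrite Hdiv.
  split; intros H'.
  - destruct (Rlt_or_le (x - gm + s) (K * a)) as [|Hle]; auto. exfalso.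
    assert (0 <= K * a - (x - gm) + s) by nra.
    assert ((K * a - (x - gm)) ^ 2 <= s * s) by nra.
    assert (0 <= K * ((c2 * a ^ 2 + 2 * a * (x + 1) + (x + 1) ^ 2) - (1 + gm) * (c2 * a ^ 2 + 2 * a + 1))) by lra.
    nra.
  - assert (s * s < (K * a - (x - gm)) ^ 2) by nra.
    assert (K * ((c2 * a ^ 2 + 2 * a * (x + 1) + (x + 1) ^ 2) - (1 + gm) * (c2 * a ^ 2 + 2 * a + 1)) < 0) by lra.
    nra.
Qed.

Lemma ap_bound x : 0 <= x -> 0 < apf gm c2 x -> apf gm c2 x <= x / ps - 1.
Proof.
  intros Hx Ha. pose proof c2_pos. pose proof c2_le1. pose proof (gam_pos r hr). fold gm in H1.
  pose proof ps_pos. pose proof ps_sq.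
  destruct (Dq_facts x Hx) as [HD Hs].
  unfold apf in *. set (s := sqrt (Dq gm c2 x)) in *.
  assert (Hs2 : s * s = Dq gm c2 x) by (apply sqrt_sqrt; auto).
  set (a := (x - gm + s) / (gm * c2)) in *.
  assert (HK : 0 < gm * c2) by nra.
  assert (Hka : gm * c2 * a = x - gm + s) by (unfold a; field; lra).
  assert (Hphi : c2 * a ^ 2 + 2 * a * (x + 1) + (x + 1) ^ 2 = (1 + gm) * (c2 * a ^ 2 + 2 * a + 1)).
  { apply Rmult_eq_reg_l with (r := gm * c2); [|lra].
    assert (gm * c2 * (c2 * a ^ 2 + 2 * a * (x + 1) + (x + 1) ^ 2 - (1 + gm) * (c2 * a ^ 2 + 2 * a + 1))
            = s * s - (gm * c2 * a - (x - gm)) ^ 2) by (rewrite Hs2; unfold Dq; ring).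
    rewrite Hka in H4. assert (s * s - (x - gm + s - (x - gm)) ^ 2 = 0) by ring. nra. }
  assert (Hsq : ((1 + ps) * (a + 1)) ^ 2 <= (x + a + 1) ^ 2).
  { replace (((1 + ps) * (a + 1)) ^ 2) with ((1 + ps) ^ 2 * (a + 1) ^ 2) by ring. rewrite H3.
    assert ((x + a + 1) ^ 2 = (1 + gm) * (a + 1) ^ 2 - gm * (1 - c2) * a ^ 2).
    { replace ((x + a + 1) ^ 2) with (c2 * a ^ 2 + 2 * a * (x + 1) + (x + 1) ^ 2 + (1 - c2) * a ^ 2) by ring.
      rewrite Hphi. ring. }
    rewrite H4.
    assert (gm * (1 - c2) * a ^ 2 <= gm * (1 - c2) * (a + 1) ^ 2).
    { apply Rmult_le_compat_l. nra. nra. }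
    nra. }
  assert ((1 + ps) * (a + 1) <= x + a + 1).
  { destruct (Rle_or_lt ((1 + ps) * (a + 1)) (x + a + 1)) as [|Hlt]; auto. exfalso.
    assert ((x + a + 1) ^ 2 < ((1 + ps) * (a + 1)) ^ 2).
    { apply Rsqr_incrst_1 in Hlt; unfold Rsqr in *; try nra. }
    lra. }
  assert (ps * (a + 1) <= x) by nra.
  apply Rmult_le_reg_r with (r := ps); auto.
  replace ((x / ps - 1) * ps) with (x - ps) by (field; lra). nra.
Qed.

End Phys.


Lemma Rmax0_eq t : Rmax 0 t = (t + Rabs t) * / 2.
Proof.
  unfold Rmax. destruct (Rle_dec 0 t).
  - rewrite Rabs_right by lra. field.
  - rewrite Rabs_left by lra. field.
Qed.

Lemma cont_Rmax0 (f : R -> R) x : continuous f x -> continuous (fun t => Rmax 0 (f t)) x.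
Proof.
  intros H. apply cont_ext with (f := fun t => (f t + Rabs (f t)) * / 2).
  { intros; rewrite Rmax0_eq; auto. }
  apply cont_mult; [|apply cont_const]. apply cont_plus; auto.
  apply (continuous_Rabs_comp f); auto.
Qed.

Lemma cont_Cd_comp N et (g : R -> R) x : (1 <= N)%nat -> 0 < et -> continuous g x ->
  continuous (fun t => Cd N et (g t)) x.
Proof.
  intros HN Het Hg. unfold Cd. apply cont_minus. apply cont_const.
  apply (cont_comp (fun t => Rmax 0 (g t)) (Tl N et)). apply cont_Rmax0; auto.
  apply Tl_cont; auto.
Qed.

Lemma cont_tau gm c2 Ps Pr x : continuous (fun x => tauf gm c2 (Ps * x) / Pr) x.
Proof.
  unfold tauf, apf.
  apply cont_mult; [|apply cont_const].
  apply cont_Rmax0.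
  apply cont_mult; [|apply cont_const].
  apply cont_plus. apply cont_smooth. auto_derive. auto.
  apply (continuous_sqrt_comp (fun x => Dq gm c2 (Ps * x))).
  apply cont_smooth. unfold Dq. auto_derive. auto.
Qed.

Lemma Cd_range N et t : (1 <= N)%nat -> 0 < et -> 0 <= Cd N et t <= 1.
Proof.
  intros. unfold Cd. assert (0 <= Rmax 0 t) by apply Rmax_l.
  pose proof (Tl_nonneg N et _ H0 H1). pose proof (Tl_le1 N et _ H H0 H1). lra.
Qed.

Lemma Cd_mono N et s t : (1 <= N)%nat -> 0 < et -> s <= t -> Cd N et s <= Cd N et t.
Proof.
  intros. unfold Cd. assert (Tl N et (Rmax 0 t) <= Tl N et (Rmax 0 s)); [|lra].
  apply Tl_decr; auto. split. apply Rmax_l. apply Rle_max_compat_l; auto.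
Qed.

Lemma Cd_nonneg_arg N et t : 0 <= t -> Cd N et t = 1 - Tl N et t.
Proof. intros. unfold Cd. rewrite Rmax_right; auto. Qed.

Lemma Rmin_lt a b r : Rmin a b < r <-> a < r \/ b < r.
Proof. unfold Rmin. destruct (Rle_dec a b); split; intros; try lra; destruct H; lra. Qed.

Lemma theta_pos p m : 0 < p -> (1 <= m)%nat -> 0 < theta p m.
Proof. intros. unfold theta. apply Rdiv_lt_0_compat; auto. apply lt_0_INR; lia. Qed.


Lemma powerRZ_sub x a b : x <> 0 -> powerRZ x (Z.of_nat a - Z.of_nat b)%Z = x ^ a / x ^ b.
Proof.
  intros Hx. replace (Z.of_nat a - Z.of_nat b)%Z with (Z.of_nat a + - Z.of_nat b)%Z by ring. rewrite powerRZ_add by auto. rewrite powerRZ_neg'.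
  rewrite <- !pow_powerRZ. reflexivity.
Qed.

Lemma sum_mult_r (f : nat -> R) n c : sum_f_R0 f n * c = sum_f_R0 (fun i => f i * c) n.
Proof. rewrite Rmult_comm, scal_sum. reflexivity. Qed.

Lemma prod_sums (A B : nat -> nat -> R) n1 n2 :
  sum_f_R0 (fun m => sum_f_R0 (fun m' => sum_f_R0 (fun k => sum_f_R0 (fun k' => A m k * B m' k') m') m) n2) n1
  = sum_f_R0 (fun m => sum_f_R0 (A m) m) n1 * sum_f_R0 (fun m' => sum_f_R0 (B m') m') n2.
Proof.
  rewrite sum_mult_r. apply sum_eq. intros m _.
  rewrite (sum_scal_l _ n2 (sum_f_R0 (A m) m)). apply sum_eq. intros m' _.
  rewrite (sum_mult_r (A m) m). apply sum_eq. intros k _.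
  rewrite (sum_scal_l _ m' (A m k)). reflexivity.
Qed.

Lemma Gam_add k N : (1 <= N)%nat -> Gam (k + N) = INR (fact (k + pred N)).
Proof. intros. unfold Gam. f_equal. f_equal. lia. Qed.

Lemma Gam_S1 m : Gam (m + 1) = INR (fact m).
Proof. unfold Gam. f_equal. f_equal. lia. Qed.

Lemma tail_val_eq N n et w P X (A : nat -> nat -> R) :
  (1 <= N)%nat -> 0 < et -> 0 < w -> X = w * P + / et -> 0 < X ->
  (forall j k, A j k = Binomial.C j k * P ^ k * Gam (k + N) * w ^ j / (Gam (j + 1) * X ^ (k + N))) ->
  tail_val N n et w P = exp (- w) / (Gam N * et ^ N) * sum_f_R0 (fun j => sum_f_R0 (A j) j) n.
Proof.
  intros HN Het Hw HX HX0 HA. unfold tail_val.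
  rewrite sum_scal_l. apply sum_eq. intros j _.
  rewrite sum_scal_l. apply sum_eq. intros k _.
  rewrite HA. unfold cf. rewrite <- HX.
  rewrite Gam_add, Gam_S1 by auto.
  replace (S (k + pred N)) with (k + N)%nat by lia.
  assert (Gam N <> 0) by (unfold Gam; apply INR_fact_neq_0).
  assert (et ^ N <> 0) by (apply pow_nonzero; lra).
  assert (X ^ (k + N) <> 0) by (apply pow_nonzero; lra).
  assert (INR (fact j) <> 0) by apply INR_fact_neq_0.
  field. auto.
Qed.

Lemma pow_div_distr (a b : R) n : b <> 0 -> (a / b) ^ n = a ^ n / b ^ n.
Proof. intros. unfold Rdiv. rewrite Rpow_mult_distr, pow_inv. reflexivity. Qed.

Lemma LB_eq (Ps : R) (msr mrr mrd msd : nat) (pisr pirr pird pisd : R)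
  (hPs : 0 < Ps)
  (hmsr : (1 <= msr)%nat) (hmrr : (1 <= mrr)%nat)
  (hmrd : (1 <= mrd)%nat) (hmsd : (1 <= msd)%nat)
  (hpisr : 0 < pisr) (hpirr : 0 < pirr) (hpird : 0 < pird) (hpisd : 0 < pisd)
  (r Pr Cx : R) (hr : 0 < r) (hPr : 0 < Pr) (hC0 : 0 <= Cx) (hC1 : Cx < 1) :
  let c2 := 1 - Cx ^ 2 in let ps := Psi r Cx in
  let al := Pr * c2 / (ps * Ps) in let be := 1 / Ps in
  let al' := Ps / (ps * Pr) in let be' := 1 / Pr in
  P_EE_LB Ps Pr Cx r msr mrr mrd msd pisr pirr pird pisd =
  1 - tail_val msd (pred mrd) (theta pisd msd) (be / (al * theta pird mrd)) (/ be)
    * tail_val mrr (pred msr) (theta pirr mrr) (be' / (al' * theta pisr msr)) (/ be').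
Proof.
  intros c2 ps al be al' be'.
  unfold P_EE_LB. cbv zeta. fold c2 ps.
  set (t1 := theta pisr msr) in *. set (t2 := theta pirr mrr) in *.
  set (t3 := theta pird mrd) in *. set (t4 := theta pisd msd) in *.
  assert (Ht1 : 0 < t1) by (apply theta_pos; auto).
  assert (Ht2 : 0 < t2) by (apply theta_pos; auto).
  assert (Ht3 : 0 < t3) by (apply theta_pos; auto).
  assert (Ht4 : 0 < t4) by (apply theta_pos; auto).
  assert (Hc2 : 0 < c2) by (unfold c2; simpl; nra).
  assert (Hps : 0 < ps) by (apply ps_pos; auto).
  set (ws := ps / (Ps * t1)). set (wr := ps / (Pr * c2 * t3)).
  assert (Hws : 0 < ws) by (unfold ws; apply Rdiv_lt_0_compat; nra).
  assert (Hwr : 0 < wr) by (unfold wr; apply Rdiv_lt_0_compat; [auto| apply Rmult_lt_0_compat; nra]).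
  set (Xs := Pr * ps / (Ps * t1) + 1 / t2). set (Xr := Ps * ps / (Pr * t3 * c2) + 1 / t4).
  assert (HXs : 0 < Xs).
  { unfold Xs. assert (0 < Pr * ps / (Ps * t1)) by (apply Rdiv_lt_0_compat; nra).
    assert (0 < 1 / t2) by (apply Rdiv_lt_0_compat; lra). lra. }
  assert (HXr : 0 < Xr).
  { unfold Xr. assert (0 < Ps * ps / (Pr * t3 * c2)) by (apply Rdiv_lt_0_compat; [nra| apply Rmult_lt_0_compat; nra]).
    assert (0 < 1 / t4) by (apply Rdiv_lt_0_compat; lra). lra. }
  replace (be' / (al' * t1)) with ws by (unfold ws, be', al'; field; repeat split; lra).
  replace (/ be') with Pr by (unfold be'; field; lra).
  replace (be / (al * t3)) with wr by (unfold wr, be, al; field; repeat split; lra).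
  replace (/ be) with Ps by (unfold be; field; lra).
  set (A := fun j k => Binomial.C j k * Pr ^ k * Gam (k + mrr) * ws ^ j / (Gam (j + 1) * Xs ^ (k + mrr))).
  set (B := fun j k => Binomial.C j k * Ps ^ k * Gam (k + msd) * wr ^ j / (Gam (j + 1) * Xr ^ (k + msd))).
  rewrite (tail_val_eq mrr (pred msr) t2 ws Pr Xs A); auto.
  2: { unfold Xs, ws. field. lra. }
  rewrite (tail_val_eq msd (pred mrd) t4 wr Ps Xr B); auto.
  2: { unfold Xr, wr. field. lra. }
  assert (HS : forall m m' k k',
    Binomial.C m k * Binomial.C m' k' *
      (powerRZ Pr (Z.of_nat k - Z.of_nat m') * Gam (k + mrr) * Gam (k' + msd) * ps ^ (m + m') /
       (powerRZ Ps (Z.of_nat m - Z.of_nat k') * Gam (m + 1) * Gam (m' + 1) * t1 ^ m * t3 ^ m' * c2 ^ m')) /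
      (Xs ^ (k + mrr) * Xr ^ (k' + msd)) = A m k * B m' k').
  { intros m m' k k'. unfold A, B, ws, wr.
    rewrite !powerRZ_sub by lra. rewrite pow_add.
    assert (Hn1 : Ps * t1 <> 0) by (apply Rgt_not_eq; nra).
    assert (Hn2 : Pr * c2 * t3 <> 0) by (apply Rgt_not_eq; apply Rmult_lt_0_compat; nra).
    rewrite (pow_div_distr ps (Ps * t1)) by auto.
    rewrite (pow_div_distr ps (Pr * c2 * t3)) by auto.
    rewrite !Rpow_mult_distr.
    assert (forall n, Gam n <> 0) by (intros; unfold Gam; apply INR_fact_neq_0).
    assert (forall n, Pr ^ n <> 0) by (intros; apply pow_nonzero; lra).
    assert (forall n, Ps ^ n <> 0) by (intros; apply pow_nonzero; lra).
    assert (forall n, t1 ^ n <> 0) by (intros; apply pow_nonzero; lra).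
    assert (forall n, t3 ^ n <> 0) by (intros; apply pow_nonzero; lra).
    assert (forall n, c2 ^ n <> 0) by (intros; apply pow_nonzero; lra).
    assert (forall n, Xs ^ n <> 0) by (intros; apply pow_nonzero; lra).
    assert (forall n, Xr ^ n <> 0) by (intros; apply pow_nonzero; lra).
    field. repeat split; auto. }
  match goal with |- 1 - ?E / ?D * ?S = _ =>
    replace S with (sum_f_R0 (fun m => sum_f_R0 (fun m' => sum_f_R0 (fun k => sum_f_R0 (fun k' => A m k * B m' k') m') m) (pred mrd)) (pred msr)) end.
  2: { apply sum_eq; intros m _. apply sum_eq; intros m' _. apply sum_eq; intros k _. apply sum_eq; intros k' _.
       symmetry. fold Xs Xr. apply HS. }
  rewrite prod_sums.
  assert (E : exp (- ps * (1 / (Ps * t1) + 1 / (Pr * t3 * c2))) = exp (- ws) * exp (- wr)).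
  { rewrite <- exp_plus. f_equal. unfold ws, wr. field. repeat split; lra. }
  rewrite E.
  assert (Gam mrr <> 0) by (unfold Gam; apply INR_fact_neq_0).
  assert (Gam msd <> 0) by (unfold Gam; apply INR_fact_neq_0).
  assert (t2 ^ mrr <> 0) by (apply pow_nonzero; lra).
  assert (t4 ^ msd <> 0) by (apply pow_nonzero; lra).
  field. repeat split; auto.
Qed.


Lemma RI_unique (f : R -> R) a b l : is_RInt f a b l -> RInt f a b = l.
Proof. apply (is_RInt_unique (V:=R_CompleteNormedModule)). Qed.



Theorem theorem3 (Ps : R) (msr mrr mrd msd : nat) (pisr pirr pird pisd : R)
  (hPs : 0 < Ps)
  (hmsr : (1 <= msr)%nat) (hmrr : (1 <= mrr)%nat)
  (hmrd : (1 <= mrd)%nat) (hmsd : (1 <= msd)%nat)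
  (hpisr : 0 < pisr) (hpirr : 0 < pirr) (hpird : 0 < pird) (hpisd : 0 < pisd)
  (r Pr Cx : R) (hr : 0 < r) (hPr : 0 < Pr) (hC0 : 0 <= Cx) (hC1 : Cx < 1) :
  exists P, is_P_EE Ps Pr Cx r msr mrr mrd msd pisr pirr pird pisd P /\
    P_EE_LB Ps Pr Cx r msr mrr mrd msd pisr pirr pird pisd <= P.
Proof.
  pose proof (LB_eq Ps msr mrr mrd msd pisr pirr pird pisd hPs hmsr hmrr hmrd hmsd
     hpisr hpirr hpird hpisd r Pr Cx hr hPr hC0 hC1) as HLB. cbv zeta in HLB.
  set (gm := gam_r r) in *. set (c2 := 1 - Cx ^ 2) in *. set (ps := Psi r Cx) in *.
  set (t1 := theta pisr msr) in *. set (t2 := theta pirr mrr) in *.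
  set (t3 := theta pird mrd) in *. set (t4 := theta pisd msd) in *.
  assert (Ht1 : 0 < t1) by (apply theta_pos; auto).
  assert (Ht2 : 0 < t2) by (apply theta_pos; auto).
  assert (Ht3 : 0 < t3) by (apply theta_pos; auto).
  assert (Ht4 : 0 < t4) by (apply theta_pos; auto).
  assert (Hgm : 0 < gm) by (apply gam_pos; auto).
  assert (Hc2 : 0 < c2) by (unfold c2; simpl; nra).
  assert (Hps : 0 < ps) by (apply ps_pos; auto).
  set (al := Pr * c2 / (ps * Ps)) in *. set (be := 1 / Ps) in *.
  set (al' := Ps / (ps * Pr)) in *. set (be' := 1 / Pr) in *.
  assert (Hal : 0 < al) by (unfold al; apply Rdiv_lt_0_compat; nra).
  assert (Hbe : 0 < be) by (unfold be; apply Rdiv_lt_0_compat; nra).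
  assert (Hal' : 0 < al') by (unfold al'; apply Rdiv_lt_0_compat; nra).
  assert (Hbe' : 0 < be') by (unfold be'; apply Rdiv_lt_0_compat; nra).
  destruct (U_lemma mrd t3 msd t4 al be hmrd hmsd Ht3 Ht4 Hal Hbe) as [Ird [HIrd HUrd]].
  set (Urd := tail_val msd (pred mrd) t4 (be / (al * t3)) (/ be)) in *.
  destruct (U_lemma msr t1 mrr t2 al' be' hmsr hmrr Ht1 Ht2 Hal' Hbe') as [Isr [HIsr HUsr]].
  set (Usr := tail_val mrr (pred msr) t2 (be' / (al' * t1)) (/ be')) in *.
  set (Gf := fun x => gamma_pdf msr t1 x * Cd mrr t2 (tauf gm c2 (Ps * x) / Pr)).
  assert (HGc : forall x, continuous Gf x).
  { intros x. apply cont_mult. apply pdf_cont. apply cont_Cd_comp; auto. apply cont_tau. }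
  assert (HGi : forall a b, is_RInt Gf a b (RInt Gf a b)).
  { intros. apply RI_correct. apply exRI_cont. intros; apply HGc. }
  assert (HG0 : forall x, 0 <= x -> 0 <= Gf x).
  { intros. unfold Gf. apply Rmult_le_pos. apply pdf_nonneg; auto. apply Cd_range; auto. }
  assert (HGle : forall x, 0 <= x -> Gf x <= gamma_pdf msr t1 x).
  { intros. unfold Gf. pose proof (pdf_nonneg msr t1 x Ht1 H). pose proof (Cd_range mrr t2 (tauf gm c2 (Ps * x) / Pr) hmrr Ht2). nra. }
  destruct (LimP_mono (fun b => RInt Gf 0 b) 0 1) as [I1 HI1].
  { intros s t Hst.
    pose proof (RI_Chasles _ _ _ _ _ _ (HGi 0 s) (HGi s t)) as H.
    rewrite (RI_unique _ _ _ _ H).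
    assert (0 <= RInt Gf s t); [|lra].
    eapply is_RInt_ge_0; [|apply HGi|]. lra. intros; apply HG0; lra. }
  { intros b Hb.
    assert (RInt Gf 0 b <= Tl msr t1 0 - Tl msr t1 b).
    { eapply is_RInt_le; [|apply HGi|apply int_pdf; auto|]. auto. intros; apply HGle; lra. }
    rewrite Tl_0' in H by auto. pose proof (Tl_nonneg msr t1 b Ht1 Hb). lra. }
  assert (HUrd0 : 0 <= Urd).
  { apply (LimP_ge0 Ird); auto. exists (be / al). intros b Hb.
    assert (0 < be / al) by (apply Rdiv_lt_0_compat; auto).
    eapply is_RInt_ge_0; [|apply HIrd; auto|]. lra.
    intros. apply Rmult_le_pos. apply pdf_nonneg; lra. apply Cd_range; auto. }
  assert (HI1le : I1 <= Usr).
  { apply (LimP_le _ _ _ _ HI1 HUsr). exists (be' / al'). intros b Hb.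
    assert (0 < be' / al') by (apply Rdiv_lt_0_compat; auto).
    eapply is_RInt_le; [|apply HGi|apply HIsr; auto|]. lra.
    intros x Hx. unfold Gf. apply Rmult_le_compat_l. apply pdf_nonneg; lra.
    unfold tauf. destruct (Rle_or_lt (apf gm c2 (Ps * x)) 0) as [Hap|Hap].
    - rewrite Rmax_left by auto. unfold Rdiv at 1. rewrite Rmult_0_l.
      unfold Cd at 1. rewrite Rmax_left by lra. rewrite Tl_0' by auto.
      pose proof (Cd_range mrr t2 (al' * x - be') hmrr Ht2). lra.
    - rewrite Rmax_right by lra. apply Cd_mono; auto.
      pose proof (ap_bound Cx r hr hC0 hC1 (Ps * x) ltac:(nra) Hap) as Hb2.
      fold gm c2 ps in Hb2.
      unfold al', be'. apply Rmult_le_reg_r with (r := Pr); auto.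
      replace ((Ps / (ps * Pr) * x - 1 / Pr) * Pr) with (Ps * x / ps - 1) by (field; lra).
      replace (apf gm c2 (Ps * x) / Pr * Pr) with (apf gm c2 (Ps * x)) by (field; lra). auto. }
  exists (1 - Urd * I1). split.
  2: { rewrite HLB. fold Urd Usr. nra. }
  assert (Hlim1 : forall m th, (1 <= m)%nat -> 0 < th -> LimP (fun b => Tl m th 0 - Tl m th b) 1).
  { intros m th Hm Hth. rewrite Tl_0' by auto.
    pose proof (LimP_minus _ _ _ _ (LimP_const 1) (Tl_lim m th Hm Hth)) as H.
    rewrite Rminus_0_r in H. exact H. }
  assert (Hthr : forall x3 x4, x4 < al * x3 - be <-> ps * (Ps * x4 + 1) < Pr * x3 * c2).
  { intros x3 x4. unfold al, be. split; intros H.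
    - apply Rmult_lt_compat_l with (r := ps * Ps) in H; [|nra].
      replace (ps * Ps * (Pr * c2 / (ps * Ps) * x3 - 1 / Ps)) with (Pr * x3 * c2 - ps) in H by (field; lra). nra.
    - apply Rmult_lt_reg_l with (r := ps * Ps); [nra|].
      replace (ps * Ps * (Pr * c2 / (ps * Ps) * x3 - 1 / Ps)) with (Pr * x3 * c2 - ps) by (field; lra). nra. }
  unfold is_P_EE, IterInt4.
  set (F1 := fun x1 => gamma_pdf msr t1 x1 * (1 - Urd * Cd mrr t2 (tauf gm c2 (Ps * x1) / Pr))).
  exists F1. split.
  { apply Impr_of with (I := fun b => (Tl msr t1 0 - Tl msr t1 b) - Urd * RInt Gf 0 b).
    - exists 0. intros b _. eapply RI_ext; [|apply RI_minus; [apply int_pdf; auto | apply RI_scal; apply HGi]].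
      intros x _. unfold F1, Gf. ring.
    - apply LimP_minus. apply Hlim1; auto. apply LimP_scal. auto. }
  intros x1 Hx1.
  set (T := tauf gm c2 (Ps * x1) / Pr).
  assert (HT : 0 <= T) by (unfold T, tauf; apply Rmult_le_pos; [apply Rmax_l| left; apply Rinv_0_lt_compat; auto]).
  assert (HsrT : forall x2, 0 < x2 -> (R_sr Ps Pr Cx x1 x2 < r <-> T < x2)).
  { intros x2 Hx2. rewrite (sr_equiv Ps Pr Cx r hPs hPr hr hC0 hC1 x1 x2 Hx1 Hx2). fold gm c2.
    unfold T. split; intros H.
    - apply Rmult_lt_reg_r with (r := Pr); auto. replace (tauf gm c2 (Ps * x1) / Pr * Pr) with (tauf gm c2 (Ps * x1)) by (field; lra). lra.
    - apply Rmult_lt_compat_r with (r := Pr) in H; auto. replace (tauf gm c2 (Ps * x1) / Pr * Pr) with (tauf gm c2 (Ps * x1)) in H by (field; lra). lra. }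
  set (f1x := gamma_pdf msr t1 x1).
  set (F2 := fun x2 => f1x * gamma_pdf mrr t2 x2 * (if Rlt_dec (R_sr Ps Pr Cx x1 x2) r then 1 else 1 - Urd)).
  exists F2. split.
  { apply Impr_of with (I := fun b => f1x * (1 - Urd) * (Tl mrr t2 0 - Tl mrr t2 T) + f1x * (Tl mrr t2 T - Tl mrr t2 b)).
    - exists T. intros b Hb. apply RI_Chasles with (b := T).
      + eapply RI_ext; [|apply RI_scal; apply int_pdf; auto].
        intros x Hx. rewrite Rmin_left, Rmax_right in Hx by lra.
        unfold F2. destruct (Rlt_dec (R_sr Ps Pr Cx x1 x) r) as [H|H].
        * exfalso. apply (proj1 (HsrT x ltac:(lra))) in H; lra.
        * ring.
      + eapply RI_ext; [|apply RI_scal; apply int_pdf; auto].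
        intros x Hx. rewrite Rmin_left, Rmax_right in Hx by lra.
        unfold F2. destruct (Rlt_dec (R_sr Ps Pr Cx x1 x) r) as [H|H].
        * ring.
        * exfalso. apply H. apply (proj2 (HsrT x ltac:(lra))); lra.
    - replace (F1 x1) with (f1x * (1 - Urd) * (Tl mrr t2 0 - Tl mrr t2 T) + f1x * (Tl mrr t2 T - 0)).
      2: { unfold F1. fold f1x. rewrite Cd_nonneg_arg by auto. rewrite Tl_0' by auto. fold T. ring. }
      apply LimP_plus. apply LimP_const. apply LimP_scal. apply LimP_minus. apply LimP_const. apply Tl_lim; auto. }
  intros x2 Hx2.
  set (c := f1x * gamma_pdf mrr t2 x2).
  exists (fun x3 => c * gamma_pdf mrd t3 x3 *
            (if Rlt_dec (R_sr Ps Pr Cx x1 x2) r then 1 else Tl msd t4 (Rmax 0 (al * x3 - be)))).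
  split.
  { unfold F2. fold c. destruct (Rlt_dec (R_sr Ps Pr Cx x1 x2) r) as [Hsr|Hsr].
    - apply Impr_of with (I := fun b => c * (Tl mrd t3 0 - Tl mrd t3 b)).
      + exists 0. intros b _. eapply RI_ext; [|apply RI_scal; apply int_pdf; auto]. intros; cbv beta; ring.
      + replace (c * 1) with (c * 1) by ring. apply LimP_scal. apply Hlim1; auto.
    - apply Impr_of with (I := fun b => c * ((Tl mrd t3 0 - Tl mrd t3 b) - Ird b)).
      + exists (be / al). intros b Hb. eapply RI_ext; [|apply RI_scal; apply RI_minus; [apply int_pdf; auto| apply HIrd; auto]].
        intros x _. unfold Cd. ring.
      + apply LimP_scal. apply LimP_minus; auto. }
  intros x3 Hx3. unfold outage_integrand. fold t1 t2 t3 t4. fold f1x.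
  set (c' := c * gamma_pdf mrd t3 x3).
  destruct (Rlt_dec (R_sr Ps Pr Cx x1 x2) r) as [Hsr|Hsr].
  - apply Impr_of with (I := fun b => c' * (Tl msd t4 0 - Tl msd t4 b)).
    + exists 0. intros b _. eapply RI_ext; [|apply RI_scal; apply int_pdf; auto].
      intros x _. destruct (Rlt_dec (Rmin (R_sr Ps Pr Cx x1 x2) (R_rd Ps Pr Cx x3 x)) r) as [H|H].
      * unfold c', c. ring.
      * exfalso. apply H. apply Rmin_lt. auto.
    + replace (c * gamma_pdf mrd t3 x3 * 1) with (c' * 1) by (unfold c'; ring).
      apply LimP_scal. apply Hlim1; auto.
  - set (T0 := Rmax 0 (al * x3 - be)).
    assert (HT0 : 0 <= T0) by apply Rmax_l.
    apply Impr_of with (I := fun b => 0 + c' * (Tl msd t4 T0 - Tl msd t4 b)).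
    + exists T0. intros b Hb. apply RI_Chasles with (b := T0).
      * eapply RI_ext; [|apply RI_zero].
        intros x Hx. rewrite Rmin_left, Rmax_right in Hx by lra.
        assert (Hlt : x < al * x3 - be).
        { unfold T0, Rmax in Hx. destruct (Rle_dec 0 (al * x3 - be)); lra. }
        destruct (Rlt_dec (Rmin (R_sr Ps Pr Cx x1 x2) (R_rd Ps Pr Cx x3 x)) r) as [H|H].
        -- exfalso. apply Rmin_lt in H. destruct H as [H|H]; [auto|].
           apply (rd_equiv Ps Pr Cx r hPs hPr hr hC0 hC1 x3 x Hx3 ltac:(lra)) in H. fold c2 ps in H.
           apply Hthr in Hlt. lra.
        -- ring.
      * eapply RI_ext; [|apply RI_scal; apply int_pdf; auto].
        intros x Hx. rewrite Rmin_left, Rmax_right in Hx by lra.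
        assert (Hgt : al * x3 - be < x).
        { unfold T0 in Hx. pose proof (Rmax_r 0 (al * x3 - be)). lra. }
        destruct (Rlt_dec (Rmin (R_sr Ps Pr Cx x1 x2) (R_rd Ps Pr Cx x3 x)) r) as [H|H].
        -- unfold c', c. ring.
        -- exfalso. apply H. apply Rmin_lt. right.
           apply (rd_equiv Ps Pr Cx r hPs hPr hr hC0 hC1 x3 x Hx3 ltac:(lra)). fold c2 ps.
           destruct (Rlt_or_le (Pr * x3 * c2) (ps * (Ps * x + 1))) as [|Hle]; auto.
           exfalso. assert (~ (ps * (Ps * x + 1) < Pr * x3 * c2)) as Hn.
           { intros Hc. apply Hthr in Hc. lra. }
           assert (Pr * x3 * c2 = ps * (Ps * x + 1)) by lra.
           (* boundary: al x3 - be = x exactly contradicts strictness *)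
           assert (x = al * x3 - be).
           { unfold al, be. apply Rmult_eq_reg_l with (r := ps * Ps); [|nra].
             replace (ps * Ps * (Pr * c2 / (ps * Ps) * x3 - 1 / Ps)) with (Pr * x3 * c2 - ps) by (field; lra). nra. }
           lra.
    + replace (c' * Tl msd t4 T0) with (0 + c' * (Tl msd t4 T0 - 0)) by ring.
      apply LimP_plus. apply LimP_const. apply LimP_scal. apply LimP_minus. apply LimP_const. apply Tl_lim; auto.
Qed.
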